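(* Let $X$ be an L-space and $Y$ its spatial part. (1) If $X$ is a zero-dimensional L-space, then $Y$ is a zero-dimensional topological space. (2) If $X$ is an SL-space, then $X$ is a zero-dimensional L-space if and only if $Y$ is zero-dimensional.
   Context: A Priestley space is a Stone space $X$ with a partial order such that clopen upsets separate points. An L-space is a Priestley space in which the downset of each clopen set is clopen and the closure of each open upset is open. ${\sf ClopUp}(X)$ is the set of clopen upsets. The spatial part of $X$ is $Y=\{y\in X\mid{\downarrow}y\text{ is clopen}\}$, topologized by declaring $V\subseteq Y$ open iff $V=U\cap Y$ for some $U\in{\sf ClopUp}(X)$. $X$ is an SL-space if $Y$ is dense in $X$. A biset is a set that is both an upset and a downset; ${\sf ClopBi}(X)$ is the set of clopen bisets; for $U\in{\sf ClopUp}(X)$, $\mathrm{cen}\,U=\bigcup\{V\in{\sf ClopBi}(X)\mid V\subseteq U\}$. $X$ is a zero-dimensional L-space if $\mathrm{cen}\,U$ is dense in $U$ for every $U\in{\sf ClopUp}(X)$. A topological space is zero-dimensional if it has a basis of clopen sets. *)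

(* Defs.v *)
From HB Require Import structures.
From mathcomp Require Import all_boot all_order.
From mathcomp Require Import boolp classical_sets topology.

Set Implicit Arguments.
Unset Strict Implicit.
Unset Printing Implicit Defensive.

Local Open Scope classical_set_scope.

Section Defs.
Context {T : topologicalType} (le : T -> T -> Prop).

Definition partial_order : Prop :=
  (forall x, le x x) /\ (forall x y, le x y -> le y x -> x = y) /\
  (forall x y z, le x y -> le y z -> le x z).

Definition upset (A : set T) : Prop := forall x y, A x -> le x y -> A y.
Definition downset (A : set T) : Prop := forall x y, A x -> le y x -> A y.
Definition biset (A : set T) : Prop := upset A /\ downset A.

Definition down (A : set T) : set T := [set y | exists2 x, A x & le y x].

Definition clopen_upset (U : set T) : Prop := clopen U /\ upset U.

Definition clopen_basis : Prop :=
  forall (U : set T) x, open U -> U x -> exists V, clopen V /\ V x /\ V `<=` U.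

Definition stone_space : Prop :=
  compact [set: T] /\ hausdorff_space T /\ clopen_basis.

Definition priestley : Prop :=
  stone_space /\ partial_order /\
  (forall x y, ~ le x y -> exists U, clopen_upset U /\ U x /\ ~ U y).

Definition L_space : Prop :=
  priestley /\
  (forall U, clopen U -> clopen (down U)) /\
  (forall U, open U -> upset U -> open (closure U)).

Definition spatial : set T := [set y | clopen (down [set y])].

Definition openY (V : set T) : Prop :=
  exists U, clopen_upset U /\ V = U `&` spatial.

(* Y is zero-dimensional: it has a basis of clopen (in Y) sets *)
Definition zero_dim_Y : Prop :=
  forall V y, openY V -> V y ->
    exists W, openY W /\ openY (spatial `\` W) /\ W y /\ W `<=` V.

Definition SL_space : Prop := L_space /\ closure spatial = [set: T].

Definition cen (U : set T) : set T :=
  \bigcup_(V in [set V | clopen V /\ biset V /\ V `<=` U]) V.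

Definition zero_dim_L_space : Prop :=
  L_space /\ (forall U, clopen_upset U -> U `<=` closure (cen U)).

End Defs.

(* Main.v *)
Require Import Defs.
From mathcomp Require Import all_boot boolp classical_sets topology.

Local Open Scope classical_set_scope.

Lemma onbhs (T : topologicalType) (O : set T) x : open O -> O x -> nbhs x O.
Proof. by move=> oO Ox; apply: open_nbhs_nbhs; split. Qed.

Lemma dense_meet (T : topologicalType) (S O : set T) z :
  closure S = setT -> open O -> O z -> exists y, S y /\ O y.
Proof.
move=> dS oO Oz.
have : closure S z by rewrite dS.
move=> /(_ O (onbhs _ _ _ oO Oz)) [y [Sy Oy]]; by exists y.
Qed.

Arguments dense_meet {T S O z}.

Lemma part1 (T : topologicalType) (le : T -> T -> Prop) :
  L_space le -> zero_dim_L_space le -> zero_dim_Y le.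
Proof.
move=> [[_ [[refl _] _]] _] [_ hz] V y [U [[cU uU] ->]] [Uy Yy].
have cy : closure (cen le U) y := hz U (conj cU uU) y Uy.
have [o _] : clopen (Defs.down le [set y]) := Yy.
have ny : nbhs y (Defs.down le [set y]) by apply: onbhs => //; exists y.
have [z [[V' [cV' [[uV' dV'] sV']] V'z] [y' yy' zy]]] := cy _ ny.
rewrite /= in yy'; subst y'.
have V'y : V' y := uV' _ _ V'z zy.
exists (V' `&` spatial le); split; [|split; [|split]].
- by exists V'.
- exists (~` V'); split.
    split; first (split; [by rewrite openC; case: cV' | by rewrite closedC; case: cV']).
    by move=> a b nVa ab Vb; apply: nVa; exact: dV' Vb ab.
  rewrite setDE; apply/seteqP; split=> t /=; tauto.
- by [].
- by move=> t [Vt Yt]; split => //; exact: sV'.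
Qed.

Lemma part2 (T : topologicalType) (le : T -> T -> Prop) :
  SL_space le -> zero_dim_Y le -> zero_dim_L_space le.
Proof.
move=> [hL dS] hY; split => // U [[oU clU] uU] x Ux B nB.
have oN : open (B° `&` U) by apply: openI => //; exact: open_interior.
have [y [Yy [By Uy]]] := dense_meet dS oN (conj nB Ux).
have [W [[U1 [[[oU1 cU1] uU1] eW]] [[U2 [[[oU2 cU2] uU2] eW2]] [Wy sW]]]] :=
  hY (U `&` spatial le) y (ex_intro _ U (conj (conj (conj oU clU) uU) erefl)) (conj Uy Yy).
subst W.
have disj : forall t, U1 t -> U2 t -> False.
  move=> t U1t U2t.
  have [y' [Yy' [U1y' U2y']]] := dense_meet dS (openI oU1 oU2) (conj U1t U2t).
  have : (spatial le `\` (U1 `&` spatial le)) y' by rewrite eW2.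
  by case=> _ []; split.
have cov : forall t, U1 t \/ U2 t.
  move=> t; have [//|h] := pselect (U1 t \/ U2 t); exfalso.
  have oC : open (~` (U1 `|` U2)) by rewrite openC; exact: closedU.
  have [y' [Yy' ny']] := dense_meet dS oC h.
  have [U1y'|nU1y'] := pselect (U1 y'); first by apply: ny'; left.
  have : (spatial le `\` (U1 `&` spatial le)) y' by split => // -[].
  by rewrite eW2 => -[U2y' _]; apply: ny'; right.
have sub : U1 `<=` U.
  move=> t U1t; have [//|nUt] := pselect (U t).
  have oC : open (U1 `&` ~` U) by apply: openI => //; rewrite openC.
  have [y' [Yy' [U1y' nUy']]] := dense_meet dS oC (conj U1t nUt).
  by have [] := sW y' (conj U1y' Yy').
exists y; split; last exact: interior_subset.
have [U1y _] := sW y Wy.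
have U1y' : U1 y by move: Wy => [].
exists U1 => //; split; [by split|split; [split => // a b U1a ba|exact: sub]].
have [//|nU1b] := pselect (U1 b).
have [//|U2b] := cov b.
by case: (disj a U1a (uU2 _ _ U2b ba)).
Qed.

Theorem theorem5p16 (T : topologicalType) (le : T -> T -> Prop) :
  L_space le ->
  (zero_dim_L_space le -> zero_dim_Y le) /\
  (SL_space le -> (zero_dim_L_space le <-> zero_dim_Y le)).
Proof.
move=> hL; split; first exact: part1.
move=> hSL; split; first exact: part1.
exact: part2.
Qed.
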